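(* Let $A\in\mathbb{R}^{m\times N}$, $K_1,K_{-1}\subseteq[N]$ disjoint, $K=K_1\cup K_{-1}$, $x_\pm=\mathbb{1}_{K_1}-\mathbb{1}_{K_{-1}}$, $0<\rho<1$ and $\tau>0$. The following are equivalent: (i) $A$ satisfies the robust bipolar ternary null space property with constants $\rho,\tau$ relative to $K_{-1},K_1$; (ii) for every $z\in[-1,1]^N$, $|K|-\sum_{i\in K_1}z_i+\sum_{i\in K_{-1}}z_i\le\rho\|z_{K^C}\|_1+\tau\|A(z-x_\pm)\|_2$.
   Context: $\mathbb{1}_S$ has entries $1$ on $S$, $0$ elsewhere; $K^C=[N]\setminus K$; $z_S$ agrees with $z$ on $S$ and is zero elsewhere. $H_{K_1,K_{-1}}=\{w\in\mathbb{R}^N: w_i\le0\text{ for } i\in K_1,\ w_i\ge0 \text{ for } i\in K_{-1}\}$. $A$ satisfies the robust bipolar ternary null space property with constants $\rho,\tau$ relative to $K_{-1},K_1$ if $\sum_{i\in K_{-1}}v_i-\sum_{i\in K_1}v_i\le\rho\sum_{i\in K^C}|v_i|+\tau\|Av\|_2$ for every $v\in H_{K_1,K_{-1}}$. *)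

(* Defs.v *)
From mathcomp Require Import all_boot all_order all_algebra.
From mathcomp Require Import reals.
Set Implicit Arguments. Unset Strict Implicit. Unset Printing Implicit Defensive.
Import Order.TTheory GRing.Theory Num.Theory.
Local Open Scope ring_scope.

Definition norm2 (R : realType) (m : nat) (v : 'cV[R]_m) : R :=
  Num.sqrt (\sum_(i < m) (v i 0) ^+ 2).

Definition indic (R : realType) (N : nat) (S : {set 'I_N}) : 'cV[R]_N :=
  \col_i (if i \in S then 1 else 0).

Definition Hset (R : realType) (N : nat) (K1 Km1 : {set 'I_N}) (w : 'cV[R]_N) : Prop :=
  (forall i, i \in K1 -> w i 0 <= 0) /\ (forall i, i \in Km1 -> 0 <= w i 0).

Definition robust_bipolar_ternary_NSP (R : realType) (m N : nat)
    (A : 'M[R]_(m, N)) (Km1 K1 : {set 'I_N}) (rho tau : R) : Prop :=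
  forall v : 'cV[R]_N, Hset K1 Km1 v ->
    \sum_(i in Km1) v i 0 - \sum_(i in K1) v i 0
      <= rho * \sum_(i in ~: (K1 :|: Km1)) `|v i 0| + tau * norm2 (A *m v).

(* Main.v *)
Require Import Defs.
From mathcomp Require Import all_boot all_order all_algebra.
From mathcomp Require Import reals.
From mathcomp Require Import lra.
Import Order.TTheory GRing.Theory Num.Theory.
Local Open Scope ring_scope.

Lemma subE (R : realType) (N : nat) (a b : 'cV[R]_N) i : (a - b) i 0 = a i 0 - b i 0.
Proof. by rewrite !mxE. Qed.

Lemma addE (R : realType) (N : nat) (a b : 'cV[R]_N) i : (a + b) i 0 = a i 0 + b i 0.
Proof. by rewrite !mxE. Qed.

Section Aux.
Variables (R : realType) (N : nat) (K1 Km1 : {set 'I_N}).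
Hypothesis hd : [disjoint K1 & Km1].

Let xpm : 'cV[R]_N := indic R K1 - indic R Km1.

Lemma xpmK1 i : i \in K1 -> xpm i 0 = 1.
Proof. by move=> h; rewrite !mxE h (disjointFr hd h) subr0. Qed.

Lemma xpmKm1 i : i \in Km1 -> xpm i 0 = -1.
Proof.
move=> h; have h' : (i \in K1) = false.
  by apply/negbTE/negP => h1; rewrite (disjointFr hd h1) in h.
by rewrite !mxE h h' sub0r.
Qed.

Lemma xpmC i : i \in ~: (K1 :|: Km1) -> xpm i 0 = 0.
Proof.
rewrite in_setC in_setU negb_or => /andP [/negbTE h1 /negbTE h2].
by rewrite !mxE h1 h2 subr0.
Qed.

Lemma ident (z : 'cV[R]_N) :
  \sum_(i in Km1) (z - xpm) i 0 - \sum_(i in K1) (z - xpm) i 0 =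
  #|K1 :|: Km1|%:R - \sum_(i in K1) z i 0 + \sum_(i in Km1) z i 0.
Proof.
have -> : \sum_(i in Km1) (z - xpm) i 0 = \sum_(i in Km1) (z i 0 + 1).
  by apply: eq_bigr => i hi; rewrite subE xpmKm1 // opprK.
have -> : \sum_(i in K1) (z - xpm) i 0 = \sum_(i in K1) (z i 0 - 1).
  by apply: eq_bigr => i hi; rewrite subE xpmK1.
rewrite big_split sumrB /= !sumr_const.
have hc : #|K1 :|: Km1| = (#|K1| + #|Km1|)%N.
  by case: (leq_card_setU K1 Km1) => _; rewrite hd => /eqP.
rewrite hc natrD; lra.
Qed.

Lemma offK (z : 'cV[R]_N) :
  \sum_(i in ~: (K1 :|: Km1)) `|(z - xpm) i 0| = \sum_(i in ~: (K1 :|: Km1)) `|z i 0|.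
Proof. by apply: eq_bigr => i hi; rewrite subE xpmC // subr0. Qed.
End Aux.

Lemma norm2Z (R : realType) (m : nat) (t : R) (w : 'cV[R]_m) :
  0 <= t -> norm2 (t *: w) = t * norm2 w.
Proof.
move=> ht; rewrite /norm2.
have -> : \sum_(i < m) ((t *: w) i 0) ^+ 2 = t ^+ 2 * \sum_(i < m) (w i 0) ^+ 2.
  by rewrite mulr_sumr; apply: eq_bigr => i _; rewrite mxE exprMn.
by rewrite sqrtrM ?sqr_ge0 // sqrtr_sqr ger0_norm.
Qed.

Theorem lemmaA1 (R : realType) (m N : nat) (A : 'M[R]_(m, N))
    (K1 Km1 : {set 'I_N}) (rho tau : R) :
  [disjoint K1 & Km1] -> 0 < rho -> rho < 1 -> 0 < tau ->
  let K := K1 :|: Km1 in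
  let xpm : 'cV[R]_N := indic R K1 - indic R Km1 in
  robust_bipolar_ternary_NSP A Km1 K1 rho tau <->
  (forall z : 'cV[R]_N, (forall i, -1 <= z i 0 <= 1) ->
     #|K|%:R - \sum_(i in K1) z i 0 + \sum_(i in Km1) z i 0
       <= rho * \sum_(i in ~: K) `|z i 0| + tau * norm2 (A *m (z - xpm))).
Proof.
move=> hd hr0 hr1 ht0 K xpm; split.
- move=> H z hz; rewrite -(@ident R N K1 Km1 hd) -(@offK R N K1 Km1); apply: H; split.
  + move=> i hi; rewrite subE (@xpmK1 R N K1 Km1 hd _ hi).
    by case/andP: (hz i) => _ h; lra.
  + move=> i hi; rewrite subE (@xpmKm1 R N K1 Km1 hd _ hi).
    by case/andP: (hz i) => h _; lra.
- move=> H v [hv1 hv2].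
  pose S := \sum_(i < N) `|v i 0|.
  have hS : 0 <= S by apply: sumr_ge0 => i _; exact: normr_ge0.
  pose t := (1 + S)^-1.
  have ht : 0 < t by rewrite invr_gt0; lra.
  have hvi : forall i, `|v i 0| <= S.
    move=> i; rewrite /S (bigD1 i) //= lerDl; exact: sumr_ge0.
  have htv : forall i, `|t * v i 0| <= 1.
    move=> i; rewrite normrM (gtr0_norm ht).
    have -> : 1 = t * (1 + S) by rewrite mulVf //; lra.
    rewrite ler_pM2l //; have := hvi i; lra.
  have hz : xpm + t *: v - xpm = t *: v by rewrite addrC addKr.
  have := H (xpm + t *: v).
  rewrite -(@ident R N K1 Km1 hd (xpm + t *: v)) -(@offK R N K1 Km1 (xpm + t *: v)) hz.
  have {}hz : forall i, -1 <= (xpm + t *: v) i 0 <= 1.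
    move=> i; rewrite addE [(t *: v) i 0]mxE.
    have := htv i; rewrite ler_norml => /andP [h1 h2].
    case: (boolP (i \in K1)) => hi1.
      rewrite (@xpmK1 R N K1 Km1 hd _ hi1); have := hv1 i hi1.
      have -> : t * v i 0 = t * v i 0 by [].
      move=> hvn; have : t * v i 0 <= 0 by rewrite pmulr_rle0.
      move=> h3; apply/andP; split; lra.
    case: (boolP (i \in Km1)) => hi2.
      rewrite (@xpmKm1 R N K1 Km1 hd _ hi2); have := hv2 i hi2.
      move=> hvn; have : 0 <= t * v i 0 by rewrite pmulr_rge0.
      move=> h3; apply/andP; split; lra.
    have hc : i \in ~: (K1 :|: Km1) by rewrite in_setC in_setU negb_or hi1 hi2.
    rewrite (@xpmC R N K1 Km1 _ hc); apply/andP; split; lra.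
  move=> /(_ hz).
  rewrite -scalemxAr (@norm2Z R m t _ (ltW ht)).
  have -> : \sum_(i in Km1) (t *: v) i 0 = t * \sum_(i in Km1) v i 0.
    by rewrite mulr_sumr; apply: eq_bigr => i _; rewrite mxE.
  have -> : \sum_(i in K1) (t *: v) i 0 = t * \sum_(i in K1) v i 0.
    by rewrite mulr_sumr; apply: eq_bigr => i _; rewrite mxE.
  have -> : \sum_(i in ~: (K1 :|: Km1)) `|(t *: v) i 0| = t * \sum_(i in ~: (K1 :|: Km1)) `|v i 0|.
    by rewrite mulr_sumr; apply: eq_bigr => i _; rewrite mxE normrM gtr0_norm.
  rewrite -mulrBr mulrCA [tau * _]mulrCA -mulrDr ler_pM2l //.
Qed.
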